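(* For every positive integer $k$, there exist a binary matrix $A_k$ and binary column vectors $x_1,\dots,x_k$ such that $R_{bool}(A_k|x_i)=R_{bool}(A_k)=4$ for all $1\le i\le k$, but $R_{bool}(A_k|x_1,\dots,x_k)\ge k$.
   Context: For a binary $n\times m$ matrix $A$, $R_{bool}(A)$ is the least $k$ such that $A=UV$ with $U\in\{0,1\}^{n\times k}$, $V\in\{0,1\}^{k\times m}$ and the product computed in the Boolean semiring ($1+1=1$). $(A|x_1,\dots,x_t)$ denotes $A$ with the columns $x_1,\dots,x_t$ appended on the right. *)

(* Defs.v *)
From mathcomp Require Import all_boot ssralg matrix.
Set Implicit Arguments. Unset Strict Implicit. Unset Printing Implicit Defensive.

Local Open Scope ring_scope.
Definition bool_mul (n k m : nat) (U : 'M[bool]_(n, k)) (V : 'M[bool]_(k, m))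
  : 'M[bool]_(n, m) :=
  \matrix_(i < n, j < m) [exists l : 'I_k, U i l && V l j].

Definition bool_factorizable (n m : nat) (A : 'M[bool]_(n, m)) (k : nat) : bool :=
  [exists U : 'M[bool]_(n, k), exists V : 'M[bool]_(k, m), A == bool_mul U V].

Lemma bool_factorizable_n (n m : nat) (A : 'M[bool]_(n, m)) :
  bool_factorizable A n.
Proof.
apply/existsP; exists (\matrix_(i < n, j < n) (i == j) : 'M[bool]_n).
apply/existsP; exists A; apply/eqP.
apply/matrixP => i j; rewrite !mxE.
apply/idP/existsP => [Aij | [l /andP [+ Hl]]].
  by exists i; rewrite mxE eqxx.
by rewrite mxE => /eqP ->.
Qed.

Local Close Scope ring_scope.

Lemma bool_factorizable_ex (n m : nat) (A : 'M[bool]_(n, m)) :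
  exists k, bool_factorizable A k.
Proof. by exists n; exact: bool_factorizable_n. Qed.

Definition bool_rank (n m : nat) (A : 'M[bool]_(n, m)) : nat :=
  ex_minn (bool_factorizable_ex A).

(* Main.v *)
Require Import Defs.
From mathcomp Require Import all_boot ssralg matrix.
Set Implicit Arguments. Unset Strict Implicit. Unset Printing Implicit Defensive.

Lemma fooling (n m r s : nat) (A : 'M[bool]_(n, m)) (f : 'I_s -> 'I_n) (g : 'I_s -> 'I_m) :
  (forall a, A (f a) (g a)) ->
  (forall a b, a != b -> ~~ (A (f a) (g b) && A (f b) (g a))) ->
  bool_factorizable A r -> s <= r.
Proof.
move=> Hd Ho /existsP [U /existsP [V /eqP EA]].
have Hl a : [exists l, U (f a) l && V l (g a)] by have := Hd a; rewrite EA mxE.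
case: r U V EA Hl => [|r] U V EA Hl.
  case: s f g Hd Ho Hl => [//|s] f g Hd Ho Hl.
  by case/existsP: (Hl ord0) => [[]].
pose h a := odflt ord0 [pick l | U (f a) l && V l (g a)].
have hP a : U (f a) (h a) && V (h a) (g a).
  rewrite /h; case: pickP => [l ->//|H]; by case/existsP: (Hl a) => l; rewrite H.
have : injective h.
  move=> a b Hab; apply/eqP; apply/negPn/negP => /Ho; rewrite !EA !mxE.
  case/negP; apply/andP; split; apply/existsP; exists (h a).
    by move: (hP a) (hP b); rewrite Hab => /andP[-> _] /andP[_ ->].
  by move: (hP a) (hP b); rewrite Hab => /andP[_ ->] /andP[-> _].
by move/leq_card; rewrite !card_ord.
Qed.

Lemma rank_ge (n m s : nat) (A : 'M[bool]_(n, m)) (f : 'I_s -> 'I_n) (g : 'I_s -> 'I_m) :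
  (forall a, A (f a) (g a)) ->
  (forall a b, a != b -> ~~ (A (f a) (g b) && A (f b) (g a))) ->
  s <= bool_rank A.
Proof. by move=> Hd Ho; rewrite /bool_rank; case: ex_minnP => r Hr _; exact: fooling Hr. Qed.

Lemma rank_le (n m r : nat) (A : 'M[bool]_(n, m)) : bool_factorizable A r -> bool_rank A <= r.
Proof. by move=> H; rewrite /bool_rank; case: ex_minnP => r' _ /(_ _ H). Qed.

Lemma fact_row (n m1 m2 r : nat) (A : 'M[bool]_(n, m1)) (B : 'M[bool]_(n, m2)) :
  bool_factorizable (row_mx A B) r -> bool_factorizable A r.
Proof.
case/existsP => U /existsP [V /eqP E]; apply/existsP; exists U; apply/existsP; exists (lsubmx V).
apply/eqP/matrixP => i j; have := congr1 (fun M : 'M_(_,_) => M i (lshift m2 j)) E.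
by rewrite /= row_mxEl !mxE => ->; apply: eq_existsb => l; rewrite mxE.
Qed.

Lemma rank_row (n m1 m2 : nat) (A : 'M[bool]_(n, m1)) (B : 'M[bool]_(n, m2)) :
  bool_rank A <= bool_rank (row_mx A B).
Proof.
rewrite {2}/bool_rank; case: ex_minnP => r Hr _; apply: rank_le; exact: fact_row Hr.
Qed.

Lemma ex4 (P : pred 'I_4) : [exists l, P l] =
  [|| P (@Ordinal 4 0 isT), P (@Ordinal 4 1 isT), P (@Ordinal 4 2 isT) | P (@Ordinal 4 3 isT)].
Proof.
apply/existsP/idP => [[[[|[|[|[|//]]]] Hl]]|].
- by rewrite (bool_irrelevance Hl isT) => ->.
- by rewrite (bool_irrelevance Hl isT) => ->; rewrite orbT.
- by rewrite (bool_irrelevance Hl isT) => ->; rewrite !orbT.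
- by rewrite (bool_irrelevance Hl isT) => ->; rewrite !orbT.
by case/or4P => H; eexists; exact H.
Qed.

Definition Am k : 'M[bool]_(4 + k, 4) :=
  (\matrix_(i < 4 + k, c < 4) (if i < 4 then (if val i == 1 then c <= 1 else val c == val i) else c < 2)%N)%R.
Definition Xm k : 'M[bool]_(4 + k, k) :=
  (\matrix_(i < 4 + k, c < k) ((val i == 0) || (4 <= i <= c + 4))%N)%R.

Lemma factX k (c : 'I_k) : bool_factorizable (row_mx (Am k) (col c (Xm k))) 4.
Proof.
apply/existsP; exists (\matrix_(i < 4 + k, l < 4)
  (if val l == 0 then (val i == 0) || (4 <= i <= c + 4) else if val l == 1 then (val i == 1) || (4 <= i)
   else val i == val l)%N)%R.
apply/existsP; exists (\matrix_(l < 4, j < 4 + 1)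
  (if val l == 0 then (val j == 0) || (val j == 4) else if val l == 1 then j <= 1 else val j == val l)%N)%R.
apply/eqP/matrixP => i j; rewrite [RHS]mxE ex4 !mxE /=.
case: (splitP j) => [j' ->|j' ->].
  rewrite mxE /=.
  case: i => [[|[|[|[|i]]]] Hi]; case: j' => [[|[|[|[|//]]]] Hj] //=; rewrite ?andbT ?andbF ?orbT ?orbF //.
rewrite ?mxE /=; case: j' => [[|//] Hj] /=.
case: i => [[|[|[|[|i]]]] Hi] //=; by rewrite ?andbT ?orbF.
Qed.

Theorem theorem6 :
  forall k : nat, 0 < k ->
  exists (n m : nat) (A : 'M[bool]_(n, m)) (X : 'M[bool]_(n, k)),
    bool_rank A = 4 /\
    (forall i : 'I_k, bool_rank (row_mx A (col i X)) = 4) /\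
    k <= bool_rank (row_mx A X).
Proof.
move=> k k0; exists (4 + k), 4, (Am k), (Xm k).
have lowA : 4 <= bool_rank (Am k).
  apply: (@rank_ge _ _ _ _ (fun a : 'I_4 => lshift k a) id).
    by move=> [[|[|[|[|//]]]] Ha]; rewrite mxE.
  move=> [[|[|[|[|//]]]] Ha] [[|[|[|[|//]]]] Hb]; rewrite !mxE //.
have upA : bool_rank (Am k) <= 4.
  apply: rank_le; exact: fact_row (factX (Ordinal k0)).
split; first by apply/eqP; rewrite eqn_leq upA lowA.
split.
  move=> c; apply/eqP; rewrite eqn_leq (rank_le (factX c)) /=.
  exact: leq_trans lowA (rank_row _ _).
apply: (@rank_ge _ _ _ _ (fun a : 'I_k => rshift 4 a) (fun a : 'I_k => rshift 4 a)).
  move=> a; by rewrite row_mxEr mxE /= addnC.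
move=> a b Hab; rewrite !row_mxEr !mxE /= ![4 + _]addnC !leq_add2r -eqn_leq.
exact: Hab.
Qed.
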